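(* Let $\{GR_n\}$ be the Gaussian Tetranacci-Lucas numbers. Then for every $n\ge1$: (a) $\sum_{k=1}^nGR_k=\frac13\left(GR_{n+2}+2GR_n+GR_{n-1}-10+2i\right)$; (b) $\sum_{k=1}^nGR_{2k+1}=\frac13\left(2GR_{2n+2}+GR_{2n}-GR_{2n-1}-11-2i\right)$; (c) $\sum_{k=1}^nGR_{2k}=\frac13\left(2GR_{2n+1}+GR_{2n-1}-GR_{2n-2}-2-8i\right)$.
   Context: The Gaussian Tetranacci-Lucas numbers are defined by $GR_0=4-i$, $GR_1=1+4i$, $GR_2=3+i$, $GR_3=7+3i$ and $GR_n=GR_{n-1}+GR_{n-2}+GR_{n-3}+GR_{n-4}$ for $n\ge4$. *)

(* Defs.v *)
From mathcomp Require Import all_boot all_order all_algebra all_field.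
Set Implicit Arguments. Unset Strict Implicit. Unset Printing Implicit Defensive.
Import GRing.Theory Num.Theory.
Local Open Scope ring_scope.

Fixpoint GR (n : nat) : algC :=
  match n with
  | 0 => 4 - 'i
  | 1 => 1 + 4 * 'i
  | 2 => 3 + 'i
  | 3 => 7 + 3 * 'i
  | S ((S ((S ((S m) as m1)) as m2)) as m3) => GR m3 + GR m2 + GR m1 + GR m
  end.

(* Main.v *)
Require Import Defs.
From mathcomp Require Import all_boot all_order all_algebra all_field.
From mathcomp Require Import ring.
Import GRing.Theory Num.Theory.
Local Open Scope ring_scope.

Lemma GRS m : GR m.+4 = GR m.+3 + GR m.+2 + GR m.+1 + GR m.
Proof. by []. Qed.

Lemma div3 (a b : algC) : 3 * a = b -> a = b / 3.
Proof.
move=> <-; rewrite [3 * a]mulrC mulfK //.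
by rewrite pnatr_eq0.
Qed.

Lemma partA m : 3 * \sum_(1 <= k < m.+2) GR k
  = GR m.+3 + 2 * GR m.+1 + GR m - 10 + 2 * 'i.
Proof.
elim: m => [|m IH].
  rewrite big_nat1 /=. ring.
rewrite big_nat_recr // mulrDr IH GRS. ring.
Qed.

Lemma partB m : 3 * \sum_(1 <= k < m.+2) GR (2 * k).+1
  = 2 * GR (2 * m.+1).+2 + GR (2 * m.+1) - GR (2 * m.+1).-1 - 11 - 2 * 'i.
Proof.
elim: m => [|m IH].
  rewrite big_nat1 /=. ring.
rewrite big_nat_recr // mulrDr IH.
have -> : (2 * m.+2 = (2 * m).+4)%N by rewrite !mulnS.
have -> : (2 * m.+1 = (2 * m).+2)%N by rewrite !mulnS.
rewrite -!pred_Sn !GRS. ring.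
Qed.

Lemma partC m : 3 * \sum_(1 <= k < m.+2) GR (2 * k)
  = 2 * GR (2 * m.+1).+1 + GR (2 * m.+1).-1 - GR (2 * m.+1 - 2) - 2 - 8 * 'i.
Proof.
elim: m => [|m IH].
  rewrite big_nat1 /=. ring.
rewrite big_nat_recr // mulrDr IH.
have -> : (2 * m.+2 = (2 * m).+4)%N by rewrite !mulnS.
have -> : (2 * m.+1 = (2 * m).+2)%N by rewrite !mulnS.
rewrite -!pred_Sn !subSS !subn0 !GRS. ring.
Qed.

Theorem mainTheorem14 (n : nat) (hn : (1 <= n)%N) :
  [/\ \sum_(1 <= k < n.+1) GR k
        = (GR n.+2 + 2 * GR n + GR n.-1 - 10 + 2 * 'i) / 3,
      \sum_(1 <= k < n.+1) GR (2 * k).+1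
        = (2 * GR (2 * n).+2 + GR (2 * n) - GR (2 * n).-1 - 11 - 2 * 'i) / 3
    & \sum_(1 <= k < n.+1) GR (2 * k)
        = (2 * GR (2 * n).+1 + GR (2 * n).-1 - GR (2 * n - 2) - 2 - 8 * 'i) / 3].
Proof.
case: n hn => // m _.
by split; apply: div3; [exact: partA | exact: partB | exact: partC].
Qed.
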